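(* Let $q\ge 2$. The class of rational subsets of $\mathrm{BS}(1,q)$ is not closed under intersection: there exist rational subsets $R_1,R_2\subseteq\mathrm{BS}(1,q)$ such that $R_1\cap R_2$ is not rational.
   Context: $\mathrm{BS}(1,q)$ is identified with $\mathbb{Z}[\tfrac1q]\rtimes\mathbb{Z}$ with $(r,m)(r',m')=(r+q^m r',m+m')$ and generators $a=(1,0)$, $t=(0,1)$. A subset is rational if it is accepted by a finite automaton whose edges are labelled by $a^{\pm1},t^{\pm1}$, i.e. it is the set of products of edge labels along runs from an initial to a final state. *)

(* Defs.v *)
From HB Require Import structures.
From mathcomp Require Import all_boot all_order all_algebra.
Set Implicit Arguments. Unset Strict Implicit. Unset Printing Implicit Defensive.
Import Order.TTheory GRing.Theory Num.Theory.
Local Open Scope ring_scope.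

(* BS(1,q) = Z[1/q] ⋊ Z, realised inside rat * int with the product
   (r,m)(r',m') = (r + q^m r', m + m').  Every element reachable from the
   generators lies in Z[1/q] x Z, so rational subsets are subsets of BS(1,q). *)
Definition BS := (rat * int)%type.

Definition bs_one : BS := (0, 0).

Definition bs_mul (q : nat) (x y : BS) : BS :=
  (x.1 + ((q%:R : rat) ^ x.2) * y.1, x.2 + y.2).

Inductive letter := La | LaInv | Lt | LtInv.

Definition letter_eval (l : letter) : BS :=
  match l with
  | La => (1, 0)
  | LaInv => (-1, 0)
  | Lt => (0, 1)
  | LtInv => (0, -1)
  end.

Definition word_eval (q : nat) (w : seq letter) : BS :=
  foldr (fun l acc => bs_mul q (letter_eval l) acc) bs_one w.

Record automaton (S : finType) := Automaton {
  aut_init : S -> bool;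
  aut_final : S -> bool;
  aut_edge : S -> letter -> S -> bool
}.

Fixpoint runs_from (S : finType) (A : automaton S) (s : S) (w : seq letter) : Prop :=
  match w with
  | [::] => aut_final A s
  | l :: w' => exists s' : S, aut_edge A s l s' /\ runs_from A s' w'
  end.

Definition accepted (q : nat) (S : finType) (A : automaton S) (g : BS) : Prop :=
  exists (s : S) (w : seq letter), aut_init A s /\ runs_from A s w /\ word_eval q w = g.

Definition rational_subset (q : nat) (R : BS -> Prop) : Prop :=
  exists (S : finType) (A : automaton S), forall g, R g <-> accepted q A g.

(* Main.v *)
Require Import Defs.
From HB Require Import structures.
From mathcomp Require Import all_boot all_order all_algebra.
From mathcomp Require Import zify ring lra.
Set Implicit Arguments. Unset Strict Implicit. Unset Printing Implicit Defensive.
Import Order.TTheory GRing.Theory Num.Theory.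

Fixpoint reach (S : finType) (A : automaton S) (s : S) (w : seq letter) (f : S) : Prop :=
  match w with
  | [::] => s = f
  | l :: w' => exists s', aut_edge A s l s' /\ reach A s' w' f
  end.

Lemma runs_reach (S : finType) (A : automaton S) s w :
  runs_from A s w <-> exists f, reach A s w f /\ aut_final A f.
Proof.
elim: w s => [|l w IH] s /=.
  by split; [move=> h; exists s | move=> [f [-> ]]].
split.
  move=> [s' [he hr]]; have [f [hf hfin]] := (IH s').1 hr.
  by exists f; split => //; exists s'.
move=> [f [[s' [he hr]] hfin]]; exists s'; split => //; apply/(IH s'); by exists f.
Qed.

Lemma reach_cat (S : finType) (A : automaton S) s x y f :
  reach A s (x ++ y) f <-> exists p, reach A s x p /\ reach A p y f.
Proof.
elim: x s => [|l x IH] s /=.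
  by split; [move=> h; exists s | move=> [p [-> ]]].
split.
  move=> [s' [he hr]]; have [p [h1 h2]] := (IH s').1 hr.
  by exists p; split => //; exists s'.
move=> [p [[s' [he h1]] h2]]; exists s'; split => //; apply/(IH s'); by exists p.
Qed.

Lemma reach_pump (S : finType) (A : automaton S) s w f : reach A s w f ->
  (exists x y z p, w = x ++ y ++ z /\ y <> [::] /\ reach A s x p /\ reach A p y p
      /\ reach A p z f) \/
  (exists V : seq S, uniq V /\ size V = (size w).+1 /\
     forall v, v \in V -> exists u1 u2, w = u1 ++ u2 /\ reach A s u1 v /\ reach A v u2 f).
Proof.
elim: w s => [|l w IH] s /=.
  move=> ->; right; exists [:: f]; split => //; split => //.
  by move=> v; rewrite inE => /eqP ->; exists [::], [::].
move=> [s' [he hr]].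
case: (IH s' hr) => [[x [y [z [p [ew [hy [h1 [h2 h3]]]]]]]] | [V [uV [sV hV]]]].
  left; exists (l :: x), y, z, p; rewrite ew; split => //; split => //; split => //.
  by exists s'.
case: (boolP (s \in V)) => hs.
  have [u1 [u2 [ew [h1 h2]]]] := hV s hs.
  left; exists [::], (l :: u1), u2, s; rewrite ew; split => //; split => //.
  by split => //; split => //; exists s'.
right; exists (s :: V); split; first by rewrite /= hs uV.
split; first by rewrite /= sV.
move=> v; rewrite inE => /orP [/eqP -> | hv].
  by exists [::], (l :: w); split => //; split => //; exists s'.
have [u1 [u2 [ew [h1 h2]]]] := hV v hv.
by exists (l :: u1), u2; rewrite ew; split => //; split => //; exists s'.
Qed.

Lemma uniq_size_card (T : finType) (V : seq T) : uniq V -> (size V <= #|T|)%N.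
Proof. by move/card_uniqP => <-; exact: max_card. Qed.

Local Open Scope ring_scope.

Lemma bs_mulA q : (0 < q)%N -> forall x y z,
  bs_mul q (bs_mul q x y) z = bs_mul q x (bs_mul q y z).
Proof.
move=> q0 [x1 x2] [y1 y2] [z1 z2]; rewrite /bs_mul /=.
have Q0 : (q%:R : rat) != 0 by rewrite pnatr_eq0 -lt0n.
rewrite expfzDr //; congr (_, _); ring.
Qed.

Lemma bs_mul1 q x : bs_mul q bs_one x = x.
Proof. by case: x => x1 x2; rewrite /bs_mul /= expr0z mul1r add0r add0r. Qed.

Lemma eval_cat q (hq : (0 < q)%N) x y :
  word_eval q (x ++ y) = bs_mul q (word_eval q x) (word_eval q y).
Proof.
elim: x => [|l x IH] /=; first by rewrite bs_mul1.
by rewrite IH bs_mulA.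
Qed.

Lemma eval_bound q (hq : (2 <= q)%N) w :
  `|(word_eval q w).1| <= (q%:R : rat) ^+ size w.
Proof.
have hQ : 2 <= (q%:R : rat) by rewrite (ler_nat _ 2 q).
elim: w => [|l w IH] /=; first by rewrite normr0 expr0.
set g := word_eval q w in IH *.
have P1 : 1 <= (q%:R : rat) ^+ size w by rewrite exprn_ege1 // (le_trans _ hQ).
rewrite exprS.
set P := (q%:R : rat) ^+ size w in IH P1 *.
case: l => /=.
- rewrite expr0z mul1r.
  apply: (le_trans (ler_normD _ _)); rewrite normr1; nra.
- rewrite expr0z mul1r.
  apply: (le_trans (ler_normD _ _)); rewrite normrN normr1; nra.
- rewrite expr1z add0r normrM ger0_norm; last by apply: (le_trans _ hQ).
  nra.
- rewrite exprN1 add0r normrM ger0_norm; last by rewrite invr_ge0 (le_trans _ hQ).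
  have u1 : (q%:R : rat)^-1 <= 1 by rewrite invf_le1 ?(le_trans _ hQ) ?(lt_le_trans _ hQ).
  have u0 : 0 <= (q%:R : rat)^-1 by rewrite invr_ge0 (le_trans _ hQ).
  set u := (q%:R : rat)^-1 in u1 u0 *.
  nra.
Qed.

Definition A1 : automaton bool :=
  Automaton (fun s => ~~ s) (fun s => s)
    (fun s l s' => match s, l, s' with
                   | false, Lt, false => true
                   | false, La, true => true
                   | true, LtInv, true => true
                   | _, _, _ => false end).

Definition A2 : automaton unit :=
  Automaton (fun _ => true) (fun _ => true)
    (fun _ l _ => if l is La then true else false).

Lemma A1_inv q w (s : bool) : runs_from A1 s w ->
  if s then exists m : nat, word_eval q w = (0, - (m%:Z))
  else exists n m : nat, word_eval q w = ((q%:R : rat) ^+ n, n%:Z - m%:Z).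
Proof.
elim: w s => [|l w IH] s /=.
  by case: s => //= _; exists 0%N.
move=> [s' [he hr]]; have := IH s' hr.
case: s he => /=; case: l => //; case: s' hr => //= hr _.
- move=> [m ->]; exists m.+1; rewrite /bs_mul /= mulr0 addr0; congr (_, _); lia.
- move=> [m ->]; exists 0%N, m; rewrite /bs_mul /= expr0z mulr0 addr0 expr0; congr (_, _); lia.
- move=> [n [m ->]]; exists n.+1, m; rewrite /bs_mul /= expr1z add0r exprS; congr (_, _); lia.
Qed.

Lemma A2_inv q w : runs_from A2 tt w -> exists m : nat, word_eval q w = (m%:R, 0).
Proof.
elim: w => [|l w IH] /=; first by exists 0%N.
move=> [[] [he hr]]; case: l he => // _.
have [m ->] := IH hr; exists m.+1; rewrite /bs_mul /= expr0z mul1r add0r.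
by rewrite -addn1 natrD addrC.
Qed.

Lemma eval_nseqLt q n w : word_eval q (nseq n Lt ++ w) =
  ((q%:R : rat) ^+ n * (word_eval q w).1, n%:Z + (word_eval q w).2).
Proof.
elim: n => [|n IH] /=; first by rewrite expr0 mul1r add0r; case: (word_eval q w).
rewrite IH /bs_mul /= expr1z add0r exprS mulrA; congr (_, _); lia.
Qed.

Lemma eval_nseqLtInv q n : word_eval q (nseq n LtInv) = (0, - n%:Z).
Proof.
elim: n => [|n IH] //=.
rewrite IH /bs_mul /= mulr0 addr0; congr (_, _); lia.
Qed.

Lemma eval_nseqLa q n : word_eval q (nseq n La) = (n%:R, 0).
Proof.
elim: n => [|n IH] //=.
rewrite IH /bs_mul /= expr0z mul1r add0r; congr (_, _).
by rewrite -addn1 natrD addrC.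
Qed.

Lemma runs_A1_up n w : runs_from A1 false w -> runs_from A1 false (nseq n Lt ++ w).
Proof. by elim: n => [|n IH] //= h; exists false; split => //; apply: IH. Qed.

Lemma runs_A1_down n : runs_from A1 true (nseq n LtInv).
Proof. by elim: n => [|n IH] //=; exists true. Qed.

Lemma runs_A2 n : runs_from A2 tt (nseq n La).
Proof. by elim: n => [|n IH] //=; exists tt. Qed.

Lemma nat_no_ap q (hq : (2 <= q)%N) a b c : (q ^ a + q ^ c = 2 * q ^ b)%N -> a = b.
Proof.
move=> E.
have qa : (0 < q ^ a)%N by rewrite expn_gt0 (ltnW hq).
have qc : (0 < q ^ c)%N by rewrite expn_gt0 (ltnW hq).
case: (ltngtP a b) => // hab.
- case: (leqP c b) => hcb.
    have h1 : (q ^ a < q ^ b)%N by rewrite ltn_exp2l.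
    have h2 : (q ^ c <= q ^ b)%N by rewrite leq_exp2l.
    lia.
  have h2 : (q ^ b.+1 <= q ^ c)%N by rewrite leq_exp2l.
  rewrite expnS in h2; set B := (q ^ b)%N in E h2; set C := (q ^ c)%N in E h2 qc; nia.
- have h2 : (q ^ b.+1 <= q ^ a)%N by rewrite leq_exp2l.
  rewrite expnS in h2; set B := (q ^ b)%N in E h2; set C := (q ^ a)%N in E h2 qa; nia.
Qed.

Lemma ap_contra q (hq : (2 <= q)%N) X Y Z a b c :
  bs_mul q X Z = ((q%:R : rat) ^+ a, 0) ->
  bs_mul q X (bs_mul q Y Z) = ((q%:R : rat) ^+ b, 0) ->
  bs_mul q X (bs_mul q Y (bs_mul q Y Z)) = ((q%:R : rat) ^+ c, 0) -> a = b.
Proof.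
case: X => x1 x2; case: Y => r e; case: Z => z1 z2; rewrite /bs_mul /=.
move=> [h1 h2] [h3 h4] [h5 h6].
have e0 : e = 0 by lia.
rewrite e0 expr0z !mul1r in h3 h5.
have E : (q%:R : rat) ^+ a + (q%:R : rat) ^+ c = 2 * (q%:R : rat) ^+ b.
  by rewrite -h1 -h3 -h5; ring.
rewrite -!natrX -natrD -natrM in E.
move/eqP: E; rewrite eqr_nat => /eqP E.
exact: nat_no_ap E.
Qed.

Theorem mainTheorem4 (q : nat) (hq : (2 <= q)%N) :
  exists R1 R2 : BS -> Prop,
    rational_subset q R1 /\ rational_subset q R2 /\
    ~ rational_subset q (fun g => R1 g /\ R2 g).
Proof.
have q0 : (0 < q)%N by apply: ltnW.
exists (accepted q A1), (accepted q A2).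
split; first by exists _, A1.
split; first by exists _, A2.
move=> [S [A hA]].
pose Q : rat := q%:R.
have inT : forall w s, aut_init A s -> runs_from A s w ->
    exists n : nat, word_eval q w = (Q ^+ n, 0).
  move=> w s hi hr.
  have [[s1 [w1 [hi1 [hr1 he1]]]] [s2 [w2 [hi2 [hr2 he2]]]]] :
      accepted q A1 (word_eval q w) /\ accepted q A2 (word_eval q w).
    by apply/hA; exists s, w.
  case: s1 hi1 hr1 => // _ /(A1_inv q) [n [m e1]].
  case: s2 hi2 hr2 => _ /(A2_inv q) [k e2].
  exists n; rewrite -he1 e1; congr (_, _).
  by move: e2; rewrite he2 -he1 e1 => [[_ h]].
set N := #|S|.
have key : forall n s w, size w = n -> aut_init A s -> runs_from A s w ->
    word_eval q w <> (Q ^+ N, 0).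
  elim/ltn_ind => n IH s w hsz hi hr he.
  have hN : (N <= size w)%N.
    have := eval_bound hq w.
    by rewrite he /= ger0_norm ?exprn_ge0 // -!natrX ler_nat leq_exp2l.
  have [f [hrf hfin]] := (runs_reach A s w).1 hr.
  case: (reach_pump hrf) => [[x [y [z [p [ew [hy [h1 [h2 h3]]]]]]]] | [V [uV [sV _]]]];
    last by have := uniq_size_card uV; rewrite sV; lia.
  have r0 : runs_from A s (x ++ z).
    by apply/runs_reach; exists f; split => //; apply/reach_cat; exists p.
  have r2 : runs_from A s (x ++ y ++ y ++ z).
    apply/runs_reach; exists f; split => //; apply/reach_cat; exists p; split => //.
    by apply/reach_cat; exists p; split => //; apply/reach_cat; exists p.
  have [a ea] := inT _ _ hi r0.
  have [c ec] := inT _ _ hi r2.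
  have hne : word_eval q (x ++ z) <> (Q ^+ N, 0).
    have hy0 : (0 < size y)%N by case: y hy {h2 ew r2 ec}.
    apply: (IH (size (x ++ z)) _ s) => //.
    by rewrite -hsz ew !size_cat; lia.
  rewrite !eval_cat // in ea ec.
  rewrite ew !eval_cat // in he.
  have eaN := ap_contra hq ea he ec.
  by apply: hne; rewrite eval_cat // ea eaN.
pose w1 := nseq N Lt ++ La :: nseq N LtInv.
have [s [w [hi [hr he]]]] : accepted q A (Q ^+ N, 0).
  apply/hA; split.
    exists false, w1; split => //; split.
      by apply: runs_A1_up; exists true; split => //; apply: runs_A1_down.
    rewrite /w1 eval_nseqLt /= eval_nseqLtInv /bs_mul /= expr0z mulr0 addr0 mulr1.
    by congr (_, _); lia.
  exists tt, (nseq (q ^ N) La); split => //; split; first exact: runs_A2.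
  by rewrite eval_nseqLa natrX.
exact: (key _ s w erefl hi hr he).
Qed.
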